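(* Let $A\in\mathbb{R}^{n\times n}$, $B\in\mathbb{R}^{n\times m}$, $C\in\mathbb{R}^{p\times n}$, $D\in\mathbb{R}^{p\times p}$ with $(A,B)$ reachable, $(C,A)$ observable, $BB^T\succ0$, $DD^T\succ0$. Fix $c>0$ and a positive integer $N$. Let $P_0\in\mathcal{P}$ be arbitrary, $P_{t+1}=r^R_c(P_t)$ for $t\ge0$, and $P^d_k=P_{kN}$ for $k\ge0$ (the $N$-block, i.e. downsampled, iteration). Let $(\overline{P}_t)_{t\ge0}$ be defined by $\overline{P}_0=BB^T$, $\overline{P}_{t+1}=r(\overline{P}_t)$. Then for every integer $q\ge0$, $$P_t\succeq\overline{P}_q\quad\text{for all } t\ge q+1,\qquad\text{and}\qquad P^d_k\succeq \overline{P}_q\quad\text{for all } k\ge \Big\lceil \tfrac{q+1}{N}\Big\rceil.$$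
   Context: $\mathcal{P}$ denotes the cone of $n\times n$ real symmetric positive definite matrices; $\succeq$ is the Loewner order; $\lambda_1(P)$ is the largest eigenvalue of $P$. For $P\in\mathcal{P}$ and $\theta$ with $I-\theta P\succ0$, let $\gamma(\theta,P)=\tfrac12\big[\log\det(I-\theta P)+\mathrm{tr}((I-\theta P)^{-1})-n\big]$. For $c>0$ and $P\in\mathcal{P}$, $\theta_c(P)$ denotes the unique $\theta\in(0,\lambda_1(P)^{-1})$ with $\gamma(\theta,P)=c$ (its existence and uniqueness are taken as given). Define $r^R_c(P)=A[P^{-1}+C^T(DD^T)^{-1}C-\theta_c(P)I_n]^{-1}A^T+BB^T$ (the risk sensitive like Riccati map) and $r(P)=A[P^{-1}+C^T(DD^T)^{-1}C]^{-1}A^T+BB^T$ (the Riccati map). *)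

(* Defs.v *)
From HB Require Import structures.
From mathcomp Require Import all_boot all_order all_algebra.
From mathcomp Require Import boolp classical_sets reals exp.
Set Implicit Arguments. Unset Strict Implicit. Unset Printing Implicit Defensive.
Import Order.TTheory GRing.Theory Num.Theory.
Local Open Scope ring_scope.
Local Open Scope classical_set_scope.

Section Defs.
Variable R : realType.

Definition posdef n (P : 'M[R]_n) : Prop :=
  P^T = P /\ forall x : 'cV[R]_n, x != 0 -> 0 < (x^T *m P *m x) 0 0.

Definition psd n (P : 'M[R]_n) : Prop :=
  P^T = P /\ forall x : 'cV[R]_n, 0 <= (x^T *m P *m x) 0 0.

Definition loewner_ge n (P Q : 'M[R]_n) : Prop := psd (P - Q).

Definition lambda1 n (P : 'M[R]_n) : R := sup [set a : R | eigenvalue P a].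

Definition gammaR n (theta : R) (P : 'M[R]_n) : R :=
  (ln (\det (1%:M - theta *: P)) + \tr (invmx (1%:M - theta *: P)) - n%:R) / 2.

(* theta_c(P): the unique theta in (0, 1/lambda1(P)) with gamma(theta,P) = c
   (existence and uniqueness taken as given; chosen by xget) *)
Definition theta_c n (c : R) (P : 'M[R]_n) : R :=
  xget 0 [set th : R | 0 < th /\ th < (lambda1 P)^-1 /\ gammaR th P = c].

Definition rR n m p (A : 'M[R]_n) (B : 'M[R]_(n, m)) (C : 'M[R]_(p, n))
  (D : 'M[R]_p) (c : R) (P : 'M[R]_n) : 'M[R]_n :=
  A *m invmx (invmx P + C^T *m invmx (D *m D^T) *m C - theta_c c P *: 1%:M) *m A^T
  + B *m B^T.

Definition ric n m p (A : 'M[R]_n) (B : 'M[R]_(n, m)) (C : 'M[R]_(p, n))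
  (D : 'M[R]_p) (P : 'M[R]_n) : 'M[R]_n :=
  A *m invmx (invmx P + C^T *m invmx (D *m D^T) *m C) *m A^T + B *m B^T.

Definition reachable n m (A : 'M[R]_n) (B : 'M[R]_(n, m)) : Prop :=
  \rank (\mxrow_(k < n) (A ^+ k *m B)) = n.

Definition observable n p (C : 'M[R]_(p, n)) (A : 'M[R]_n) : Prop :=
  \rank (\mxcol_(k < n) (C *m A ^+ k)) = n.

End Defs.

(* Main.v *)
Require Import Defs.
From HB Require Import structures.
From mathcomp Require Import all_boot all_order all_algebra.
From mathcomp Require Import boolp classical_sets reals exp.
From mathcomp Require Import sesquilinear spectral complex.
From mathcomp Require Import lra.
Import Order.TTheory GRing.Theory Num.Theory.
Local Open Scope ring_scope.
Set Implicit Arguments. Unset Strict Implicit. Unset Printing Implicit Defensive.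

Section Helpers.
Variable R : realType.
Import Num.Def.
Local Notation f := (real_complex R).

Lemma conj_realC (r : R) : (f r)^* = f r.
Proof. by apply: conj_Creal; apply/complex_realP; exists r. Qed.

Lemma map_conj_real m k (X : 'M[R]_(m, k)) : map_mx conjC (map_mx f X) = map_mx f X.
Proof. by apply/matrixP => i j; rewrite !mxE conj_realC. Qed.

Local Open Scope sesquilinear_scope.

Lemma spec_pd n (M : 'M[R]_n) : M^T = M ->
  (forall b, eigenvalue M b -> 0 < b) -> posdef M.
Proof.
move=> Msym Meig; split=> // x x0.
pose Mc := map_mx f M.
have herm : Mc \is hermsymmx.
  rewrite is_hermitianmxE expr0 scale1r /Mc map_trmx Msym.
  by rewrite map_conj_real.
have := orthomx_spectralP (A := Mc) (hermitian_normalmx herm).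
set U := spectralmx Mc; set d := spectral_diag Mc => Aeq.
have Uu : U \is unitarymx by exact: spectral_unitarymx.
have Uunit : U \in unitmx by exact: spectral_unit.
have dreal := hermitian_spectral_diag_real herm.
pose y := map_mx f x^T.
pose w := y *m U^t*.
have key : f ((x^T *m M *m x) 0 0) = (w *m diag_mx d *m w^t*) 0 0.
  have -> : f ((x^T *m M *m x) 0 0) = (map_mx f (x^T *m M *m x)) 0 0.
    by rewrite [in RHS]mxE.
  rewrite !map_mxM.
  have -> : map_mx f x = y^t* by rewrite /y map_trmx trmxK map_conj_real.
  rewrite -/Mc Aeq (invmx_unitary Uu) /w trmx_mul map_mxM trmxCK.
  by rewrite !mulmxA.
have w0 : w != 0.
  apply: contraNneq x0 => w0.
  have : y = w *m U by rewrite /w -mulmxA -(invmx_unitary Uu) mulVmx ?mulmx1.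
  rewrite w0 mul0mx => /eqP; rewrite map_mx_eq0 => /eqP.
  by move=> /(congr1 trmx); rewrite trmxK trmx0 => ->.
have dpos : forall j, 0 < d 0 j.
  move=> j.
  have /complex_realP [k dk] : d 0 j \is Num.real by move/mxOverP : dreal; apply.
  have eigk : eigenvalue Mc (d 0 j).
    apply/eigenvalueP; exists (delta_mx 0 j *m U).
      have -> : delta_mx 0 j *m U *m Mc = delta_mx 0 j *m U *m (invmx U *m diag_mx d *m U) by rewrite -Aeq.
      rewrite !mulmxA mulmxK // -rowE row_diag_mx.
      by rewrite scalemxAl.
    apply: contraTneq isT => /(congr1 (mulmx^~ (invmx U))).
    rewrite mulmxK // mul0mx => /matrixP /(_ 0 j); rewrite !mxE !eqxx /=.
    by move=> /eqP; rewrite oner_eq0.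
  rewrite dk -(rmorph0 f) ltcR; apply: Meig.
  by move: eigk; rewrite dk /Mc (eigenvalue_map f).
clearbody w.
have term0 : forall i, w 0 i * d 0 i * (w 0 i)^* = d 0 i * `|w 0 i| ^+ 2.
  by move=> i; rewrite mulrAC normCK mulrC.
have [j wj] : exists j, w 0 j != 0.
  case: (pickP (fun j => w 0 j != 0)) => [j wj|none]; first by exists j.
  case/eqP: w0; apply/rowP => j; rewrite [RHS]mxE.
  by have := none j; rewrite /= => /negbFE /eqP.
rewrite -ltcR rmorph0 key mul_mx_diag mxE (bigD1 j) //= !mxE term0.
apply: ltr_wpDr.
  apply: sumr_ge0 => i _; rewrite !mxE term0.
  by apply: mulr_ge0; [exact: ltW | exact: exprn_ge0].
by apply: mulr_gt0 => //; apply: exprn_gt0; rewrite normr_gt0.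
Qed.
Local Close Scope sesquilinear_scope.

Definition bf n (M : 'M[R]_n) (x y : 'cV[R]_n) := (x^T *m M *m y) 0 0.
Definition qf n (M : 'M[R]_n) (x : 'cV[R]_n) := bf M x x.

Lemma bfDM n (M N : 'M[R]_n) x y : bf (M + N) x y = bf M x y + bf N x y.
Proof. by rewrite /bf mulmxDr mulmxDl mxE. Qed.
Lemma bfNM n (M : 'M[R]_n) x y : bf (- M) x y = - bf M x y.
Proof. by rewrite /bf mulmxN mulNmx mxE. Qed.
Lemma bfBM n (M N : 'M[R]_n) x y : bf (M - N) x y = bf M x y - bf N x y.
Proof. by rewrite bfDM bfNM. Qed.
Lemma bfZM n a (M : 'M[R]_n) x y : bf (a *: M) x y = a * bf M x y.
Proof. by rewrite /bf -scalemxAr -scalemxAl mxE. Qed.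
Lemma bfBl n (M : 'M[R]_n) x x' y : bf M (x - x') y = bf M x y - bf M x' y.
Proof. by rewrite /bf linearB /= !mulmxBl !mxE. Qed.
Lemma bfBr n (M : 'M[R]_n) x y y' : bf M x (y - y') = bf M x y - bf M x y'.
Proof. by rewrite /bf mulmxBr !mxE. Qed.
Lemma bf_sym n (M : 'M[R]_n) x y : M^T = M -> bf M x y = bf M y x.
Proof.
move=> sM; rewrite /bf.
have -> : (x^T *m M *m y) 0 0 = ((x^T *m M *m y)^T) 0 0 by rewrite [RHS]mxE.
by rewrite !trmx_mul trmxK sM mulmxA.
Qed.
Lemma qf_cong k l (A : 'M[R]_(k, l)) (M : 'M[R]_l) x :
  qf (A *m M *m A^T) x = qf M (A^T *m x).
Proof. by rewrite /qf /bf trmx_mul trmxK !mulmxA. Qed.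
Lemma qf1_ge0 n (x : 'cV[R]_n) : 0 <= qf 1%:M x.
Proof.
rewrite /qf /bf mulmx1 mxE; apply: sumr_ge0 => i _; rewrite mxE -expr2.
exact: sqr_ge0.
Qed.

Lemma psdD n (M N : 'M[R]_n) : psd M -> psd N -> psd (M + N).
Proof.
move=> [sM hM] [sN hN]; split; first by rewrite linearD /= sM sN.
by move=> x; have := addr_ge0 (hM x) (hN x); rewrite -bfDM.
Qed.

Lemma pd_psd n (M : 'M[R]_n) : posdef M -> psd M.
Proof.
move=> [sM hM]; split => // x; have [->|x0] := eqVneq x 0.
  by rewrite mulmx0 mxE.
exact: ltW (hM x x0).
Qed.

Lemma pdD n (M N : 'M[R]_n) : posdef M -> psd N -> posdef (M + N).
Proof.
move=> [sM hM] [sN hN]; split; first by rewrite linearD /= sM sN.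
by move=> x x0; have := ltr_wpDr (hN x) (hM x x0); rewrite -bfDM.
Qed.

Lemma psd_cong k l (A : 'M[R]_(k, l)) (M : 'M[R]_l) :
  psd M -> psd (A *m M *m A^T).
Proof.
move=> [sM hM]; split; first by rewrite !trmx_mul trmxK sM mulmxA.
move=> x; change (0 <= qf (A *m M *m A^T) x); rewrite qf_cong; exact: hM.
Qed.

Lemma psd_trans n (P Q S : 'M[R]_n) : psd (P - Q) -> psd (Q - S) -> psd (P - S).
Proof. by move=> h1 h2; have := psdD h1 h2; rewrite addrA subrK. Qed.

Lemma psd_scal1 n (a : R) : 0 <= a -> psd (a *: (1%:M : 'M[R]_n)).
Proof.
move=> a0; split; first by rewrite linearZ /= trmx1.
move=> x; rewrite -[(_ *m _ *m _) 0 0]/(bf _ x x) bfZM.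
exact: mulr_ge0 a0 (qf1_ge0 x).
Qed.

Lemma pd_unit n (X : 'M[R]_n) : posdef X -> X \in unitmx.
Proof.
move=> [sX hX]; rewrite unitmxE unitfE; apply/negP => /det0P [v v0 vX].
have vT0 : v^T != 0 by apply: contra v0 => /eqP h; rewrite -[v]trmxK h trmx0.
by have := hX _ vT0; rewrite trmxK vX mul0mx mxE ltxx.
Qed.

Lemma pd_inv n (X : 'M[R]_n) : posdef X -> posdef (invmx X).
Proof.
move=> hX; have Xu := pd_unit hX; case: hX => sX hX.
split; first by rewrite trmx_inv sX.
move=> x x0; set y := invmx X *m x.
have xy : x = X *m y by rewrite /y mulKVmx.
have y0 : y != 0 by apply: contra x0 => /eqP h; rewrite xy h mulmx0.
rewrite {1}xy trmx_mul sX mulmxK // xy mulmxA.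
exact: hX.
Qed.

Lemma var_ineq n (Y : 'M[R]_n) x z : posdef Y ->
  2 * (z^T *m x) 0 0 - qf Y z <= qf (invmx Y) x.
Proof.
move=> hY; have Yu := pd_unit hY; have [_ hYp] := pd_psd hY; case: hY => sY _.
set v := invmx Y *m x.
have Yv : Y *m v = x by rewrite /v mulKVmx.
have h := hYp (z - v).
have e1 : bf Y (z - v) (z - v) = qf Y z - 2 * bf Y z v + bf Y v v.
  rewrite bfBl !bfBr (bf_sym v z sY) /qf; lra.
have e2 : bf Y z v = (z^T *m x) 0 0 by rewrite /bf -mulmxA Yv.
have e3 : bf Y v v = qf (invmx Y) x.
  by rewrite /bf -mulmxA Yv /qf /bf /v trmx_mul trmx_inv sY.
move: h; rewrite -[(_ *m _ *m _) 0 0]/(bf Y (z - v) (z - v)) e1 e2 e3.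
lra.
Qed.

Lemma inv_anti n (X Y : 'M[R]_n) : posdef X -> posdef Y -> psd (X - Y) ->
  psd (invmx Y - invmx X).
Proof.
move=> hX hY [_ hXY]; have Xu := pd_unit hX.
have [sX _] := hX; have [sY _] := hY.
split; first by rewrite linearB /= !trmx_inv sX sY.
move=> x; rewrite -[(_ *m _ *m _) 0 0]/(bf _ x x) bfBM subr_ge0.
set z := invmx X *m x.
have e1 : (z^T *m x) 0 0 = qf (invmx X) x.
  by rewrite /z trmx_mul trmx_inv sX.
have e2 : qf X z = qf (invmx X) x.
  by rewrite /qf /bf -mulmxA /z mulKVmx // e1.
have := hXY z; rewrite -[(_ *m _ *m _) 0 0]/(bf _ z z) bfBM subr_ge0 => h.
have := var_ineq x z hY.
rewrite -/(qf X z) in h.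
rewrite e1 -/(qf (invmx Y) x) -/(qf (invmx X) x); rewrite e2 in h.
have h2 : qf Y z <= qf (invmx X) x := h. lra.
Qed.

Lemma theta_pd n (c : R) (P : 'M[R]_n) : posdef P ->
  0 <= theta_c c P /\ posdef (invmx P - theta_c c P *: 1%:M).
Proof.
move=> hP; have Pu := pd_unit hP; have [sP hPq] := hP.
rewrite /theta_c; set S := (X in xget _ X).
have [ex|nex] := pselect (exists th, S th); last first.
  rewrite xgetPN; last by move=> th Sth; apply: nex; exists th.
  by rewrite scale0r subr0; split => //; exact: pd_inv.
have [th0 [thlt _]] := xgetPex 0 ex.
set th := xget 0 S in th0 thlt *.
split; first exact: ltW.
have hsup : has_sup (fun a : R => eigenvalue P a).
  have [//|nh] := pselect (has_sup (fun a : R => eigenvalue P a)).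
  by move: thlt; rewrite /lambda1 sup_out // invr0 => /(lt_trans th0); rewrite ltxx.
have lamb : forall a, eigenvalue P a -> a <= lambda1 P.
  by move=> a ha; exact: (sup_upper_bound hsup) ha.
have lam0 : 0 < lambda1 P by rewrite -invr_gt0; exact: lt_trans thlt.
apply: spec_pd.
  by rewrite linearB /= trmx_inv sP linearZ /= trmx1.
move=> b /eigenvalueP [v vM v0].
have vP : v *m invmx P = (b + th) *: v.
  move: vM; rewrite mulmxBr -scalemxAr mulmx1 => /eqP; rewrite subr_eq => /eqP ->.
  by rewrite scalerDl.
have vv : v = (b + th) *: (v *m P).
  by rewrite scalemxAl -vP mulmxKV.
have bt0 : b + th != 0.
  by apply: contra v0 => /eqP h; rewrite vv h scale0r.
have vPe : v *m P = (b + th)^-1 *: v.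
  by rewrite {2}vv scalerA mulVf // scale1r.
have eig : eigenvalue P (b + th)^-1 by apply/eigenvalueP; exists v.
have vT0 : v^T != 0 by apply: contra v0 => /eqP h; rewrite -[v]trmxK h trmx0.
have pos := hPq _ vT0; rewrite trmxK vPe -scalemxAl mxE in pos.
have s0 : 0 <= (v *m v^T) 0 0.
  rewrite mxE; apply: sumr_ge0 => i _; rewrite mxE -expr2; exact: sqr_ge0.
have ipos : 0 < (b + th)^-1.
  rewrite ltNge; apply/negP => hle; move: pos; rewrite ltNge.
  by rewrite mulr_le0_ge0.
have le1 := lamb _ eig.
have : (lambda1 P)^-1 <= b + th.
  by rewrite -[b + th]invrK lef_pV2 ?posrE.
lra.
Qed.

Definition G n m (A : 'M[R]_n) (B : 'M[R]_(n, m)) (X : 'M[R]_n) :=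
  A *m X *m A^T + B *m B^T.

Lemma G_mono n m (A : 'M[R]_n) (B : 'M[R]_(n, m)) X Y :
  psd (X - Y) -> psd (G A B X - G A B Y).
Proof.
move=> h; rewrite /G opprD addrACA subrr addr0 -mulmxBl -mulmxBr.
exact: psd_cong.
Qed.

Lemma G_ge n m (A : 'M[R]_n) (B : 'M[R]_(n, m)) X :
  psd X -> psd (G A B X - B *m B^T).
Proof. by move=> h; rewrite /G addrK; exact: psd_cong. Qed.

Lemma G_pd n m (A : 'M[R]_n) (B : 'M[R]_(n, m)) X :
  psd X -> posdef (B *m B^T) -> posdef (G A B X).
Proof. by move=> h hB; rewrite /G addrC; apply: pdD => //; exact: psd_cong. Qed.

End Helpers.

Theorem proposition1 (R : realType) (n m p : nat)
  (A : 'M[R]_n) (B : 'M[R]_(n, m)) (C : 'M[R]_(p, n)) (D : 'M[R]_p)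
  (hreach : reachable A B) (hobs : observable C A)
  (hB : posdef (B *m B^T)) (hD : posdef (D *m D^T))
  (c : R) (hc : 0 < c) (N : nat) (hN : (0 < N)%N)
  (P0 : 'M[R]_n) (hP0 : posdef P0) :
  let P := fun t : nat => iter t (rR A B C D c) P0 in
  let Pd := fun k : nat => P (k * N)%N in
  let Pbar := fun t : nat => iter t (ric A B C D) (B *m B^T) in
  forall q : nat,
    (forall t : nat, (q.+1 <= t)%N -> loewner_ge (P t) (Pbar q)) /\
    (forall k : nat, Num.ceil ((q.+1)%:R / N%:R : R) <= k%:Z ->
       loewner_ge (Pd k) (Pbar q)).
Proof.
move=> P Pd Pbar q.
pose K := C^T *m invmx (D *m D^T) *m C.
have hK : psd K.
  by rewrite /K -[X in _ *m X](trmxK C); apply: psd_cong; apply: pd_psd; apply: pd_inv.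
have rRE : forall X, rR A B C D c X =
    G A B (invmx ((invmx X - theta_c c X *: 1%:M) + K)).
  by move=> X; rewrite /G /rR addrAC.
have ricE : forall X, ric A B C D X = G A B (invmx (invmx X + K)) by [].
have pdS : forall X : 'M[R]_n, posdef X -> posdef (invmx X + K).
  by move=> X hX; apply: pdD => //; exact: pd_inv.
have pdSt : forall X : 'M[R]_n, posdef X ->
    posdef ((invmx X - theta_c c X *: 1%:M) + K).
  by move=> X hX; apply: pdD => //; case: (theta_pd c hX).
have rR_pd : forall X, posdef X -> posdef (rR A B C D c X).
  by move=> X hX; rewrite rRE; apply: G_pd => //; apply: pd_psd; apply: pd_inv; exact: pdSt.
have ric_pd : forall X, posdef X -> posdef (ric A B C D X).
  by move=> X hX; rewrite ricE; apply: G_pd => //; apply: pd_psd; apply: pd_inv; exact: pdS.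
have rR_ge : forall X, posdef X -> psd (rR A B C D c X - ric A B C D X).
  move=> X hX; rewrite rRE ricE; apply: G_mono; apply: inv_anti.
  - exact: pdS.
  - exact: pdSt.
  rewrite opprD addrACA subrr addr0 subKr; apply: psd_scal1.
  by case: (theta_pd c hX).
have ric_mono : forall X Y, posdef X -> posdef Y -> psd (X - Y) ->
    psd (ric A B C D X - ric A B C D Y).
  move=> X Y hX hY hXY; rewrite !ricE; apply: G_mono; apply: inv_anti.
  - exact: pdS.
  - exact: pdS.
  by rewrite opprD addrACA subrr addr0; exact: inv_anti.
have Ppd : forall t, posdef (P t).
  by elim=> [|t IH] //=; exact: rR_pd.
have Pbpd : forall t, posdef (Pbar t).
  by elim=> [|t IH] //=; exact: ric_pd.
have PS : forall t, P t.+1 = rR A B C D c (P t) by [].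
have PbS : forall t, Pbar t.+1 = ric A B C D (Pbar t) by [].
have Pb0 : Pbar 0%N = B *m B^T by [].
have main : forall j, psd (P (q.+1 + j)%N - Pbar q).
  elim: q => [|q IH] j.
    rewrite add1n PS Pb0 rRE; apply: G_ge; apply: pd_psd; apply: pd_inv.
    exact: pdSt.
  rewrite addSn PS PbS.
  apply: psd_trans (rR_ge _ (Ppd _)) _.
  by apply: ric_mono => //; exact: IH.
split.
  by move=> t ht; rewrite -(subnKC ht); exact: main.
move=> k hk; rewrite /Pd.
have hq : (q.+1 <= k * N)%N.
  move: hk; rewrite ceil_le_int => hk.
  have N0 : (0 : R) < N%:R by rewrite ltr0n.
  move: hk; rewrite ler_pdivrMr // -[k%:Z%:~R]/(k%:R) -natrM ler_nat.
  by [].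
by rewrite -(subnKC hq); exact: main.
Qed.
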